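(* Let $(\varphi_\alpha)_{\alpha>0}$ be a non-linear regularizing filter and fix $\alpha>0$. Then $\operatorname{ran}(\mathbf{M}_\kappa^+\circ\Phi_{\alpha,\kappa})\subseteq\operatorname{dom}(\mathcal{R}_\alpha)$, and moreover $\operatorname{ran}(\mathbf{M}_\kappa^+\circ\Phi_{\alpha,\kappa})\subseteq\operatorname{dom}(\partial\mathcal{R}_\alpha)$.
   Context: $\Lambda$ is an at most countable index set and $\kappa=(\kappa_\lambda)_{\lambda\in\Lambda}\in(0,\infty)^\Lambda$ with $\sup_\lambda\kappa_\lambda<\infty$. $\mathbf{M}_\kappa\colon\ell^2(\Lambda)\to\ell^2(\Lambda)$, $(x_\lambda)\mapsto(\kappa_\lambda x_\lambda)$; $\mathbf{M}_\kappa^+$ is its Moore–Penrose inverse, with domain $\{(c_\lambda)\in\ell^2:(c_\lambda/\kappa_\lambda)\in\ell^2\}$ and $\mathbf{M}_\kappa^+((c_\lambda))=(c_\lambda/\kappa_\lambda)$. A non-linear regularizing filter is a family $(\varphi_\alpha)_{\alpha>0}$ of functions $\varphi_\alpha\colon(0,\infty)\times\mathbb{R}\to\mathbb{R}$ such that for all $\alpha,\kappa>0$: (F1) $\varphi_\alpha(\kappa,\cdot)$ is non-decreasing; (F2) $\varphi_\alpha(\kappa,\cdot)$ is 1-Lipschitz; (F3) $\varphi_\alpha(\kappa,0)=0$; (F4) $\lim_{\alpha\to0}\varphi_\alpha(\kappa,c)=c$ for all $c\in\mathbb{R}$. $\Phi_{\alpha,\kappa}((c_\lambda))=(\varphi_\alpha(\kappa_\lambda,c_\lambda))_\lambda$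 on $\ell^2(\Lambda)$; $\operatorname{dom}(\mathbf{M}_\kappa^+\circ\Phi_{\alpha,\kappa})=\{z:\Phi_{\alpha,\kappa}(z)\in\operatorname{dom}(\mathbf{M}_\kappa^+)\}$. $\kappa$-regularizer: for each $\alpha>0,\lambda\in\Lambda$ let $s_{\alpha,\lambda}\colon\mathbb{R}\to\mathbb{R}\cup\{\infty\}$ be proper, convex, lower semi-continuous with $s_{\alpha,\lambda}\ge s_{\alpha,\lambda}(0)=0$ and $\varphi_\alpha(\kappa_\lambda,\cdot)=\operatorname{prox}_{s_{\alpha,\lambda}}$ (such functions exist); then $\mathcal{R}_\alpha((x_\lambda)_\lambda):=\sum_{\lambda}s_{\alpha,\lambda}(\kappa_\lambda x_\lambda)$ on $\ell^2(\Lambda)$. Here $\operatorname{prox}_f(x)=\operatorname{argmin}_y\tfrac12|x-y|^2+f(y)$, $\operatorname{dom}(\mathcal{R})=\{x:\mathcal{R}(x)<\infty\}$ and $\partial$ denotes the convex subdifferential. *)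

(* Defs.v *)
From HB Require Import structures.
From mathcomp Require Import all_boot all_order all_algebra.
From mathcomp Require Import all_classical all_reals all_analysis.
Set Implicit Arguments. Unset Strict Implicit. Unset Printing Implicit Defensive.
Import Order.TTheory GRing.Theory Num.Theory.
Import numFieldNormedType.Exports.
Local Open Scope classical_set_scope.
Local Open Scope ring_scope.

(* Sequences indexed by an at most countable index set Lambda (a countType,
   possibly finite) are functions Lambda -> R.  *)

Definition l2 {R : realType} {L : countType} (x : L -> R) : Prop :=
  (\esum_(i in [set: L]) ((x i) ^+ 2)%:E < +oo)%E.

(* inner product on l^2(Lambda): sum of the absolutely summable family
   (u_i v_i)_i, written as (sum of positive parts) - (sum of negative parts) *)
Definition l2_inner {R : realType} {L : countType} (u v : L -> R) : R :=
  fine (\esum_(i in [set: L]) (Num.max (u i * v i) 0)%:E)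
  - fine (\esum_(i in [set: L]) (Num.max (- (u i * v i)) 0)%:E).

Definition nonlinear_reg_filter {R : realType} (phi : R -> R -> R -> R) : Prop :=
  forall alpha kappa : R, 0 < alpha -> 0 < kappa ->
    [/\ {homo phi alpha kappa : a b / a <= b},
        (forall a b, `|phi alpha kappa a - phi alpha kappa b| <= `|a - b|),
        phi alpha kappa 0 = 0 &
        (forall c, phi a kappa c @[a --> 0^'+] --> c)].

Definition econvex {R : realType} (f : R -> \bar R) : Prop :=
  forall (x y t : R), (0 < t < 1)%R ->
    (f (t * x + (1 - t) * y)%R <= t%:E * f x + (1 - t)%R%:E * f y)%E.

Definition eproper {R : realType} (f : R -> \bar R) : Prop :=
  (forall x, f x != -oo%E) /\ exists x, f x != +oo%E.

Definition is_prox {R : realType} (f : R -> \bar R) (g : R -> R) : Prop :=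
  forall x y, ((2^-1 * (x - g x) ^+ 2)%R%:E + f (g x)
               <= (2^-1 * (x - y) ^+ 2)%R%:E + f y)%E.

Definition kappa_reg_family {R : realType} {L : countType}
  (phi : R -> R -> R -> R) (kappa : L -> R) (s : R -> L -> R -> \bar R) : Prop :=
  forall alpha (l : L), 0 < alpha ->
    [/\ eproper (s alpha l), econvex (s alpha l),
        lower_semicontinuous (s alpha l),
        ((forall x, (s alpha l 0%R <= s alpha l x)%E) /\ s alpha l 0%R = 0%E) &
        is_prox (s alpha l) (phi alpha (kappa l))].

Definition kappa_regularizer {R : realType} {L : countType}
  (kappa : L -> R) (s : R -> L -> R -> \bar R) (alpha : R) (x : L -> R) : \bar R :=
  \esum_(l in [set: L]) s alpha l (kappa l * x l).

Definition in_dom {R : realType} {L : countType} (Rc : (L -> R) -> \bar R)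
  (x : L -> R) : Prop := l2 x /\ (Rc x < +oo)%E.

Definition in_subdiff {R : realType} {L : countType} (Rc : (L -> R) -> \bar R)
  (x v : L -> R) : Prop :=
  l2 v /\ forall y, l2 y -> (Rc x + (l2_inner v (fun l => y l - x l))%:E <= Rc y)%E.

Definition in_dom_subdiff {R : realType} {L : countType} (Rc : (L -> R) -> \bar R)
  (x : L -> R) : Prop := l2 x /\ exists v, in_subdiff Rc x v.

Definition Phi {R : realType} {L : countType} (phi : R -> R -> R -> R)
  (alpha : R) (kappa : L -> R) (z : L -> R) : L -> R :=
  fun l => phi alpha (kappa l) (z l).
Definition Mplus {R : realType} {L : countType} (kappa : L -> R) (c : L -> R) : L -> R :=
  fun l => c l / kappa l.
Definition in_dom_Mplus {R : realType} {L : countType} (kappa : L -> R) (c : L -> R) : Prop :=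
  l2 c /\ l2 (Mplus kappa c).

Definition in_ran_MPhi {R : realType} {L : countType} (phi : R -> R -> R -> R)
  (alpha : R) (kappa : L -> R) (x : L -> R) : Prop :=
  exists z, l2 z /\ in_dom_Mplus kappa (Phi phi alpha kappa z)
            /\ x = Mplus kappa (Phi phi alpha kappa z).

(* Main.v *)
Require Import Defs.
From mathcomp Require Import all_boot all_order all_algebra.
From mathcomp Require Import all_classical all_reals all_analysis.
From mathcomp Require Import ring lra.
Import Order.TTheory GRing.Theory Num.Theory.
Local Open Scope classical_set_scope.
Local Open Scope ring_scope.

Section comp.
Context {R : realType} (f : R -> \bar R) (g : R -> R).
Hypotheses (fcvx : econvex f) (f0 : f 0 = 0%E) (fge : forall x, (f 0 <= f x)%E)
  (prox : is_prox f g).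

Lemma fge0 x : (0 <= f x)%E. Proof. by rewrite -f0. Qed.

Lemma comp_fin z : exists r, f (g z) = r%:E /\ 0 <= r /\
   2^-1 * (z - g z) ^+ 2 + r <= 2^-1 * z ^+ 2.
Proof.
have := prox z 0; rewrite f0 adde0 subr0.
have := fge0 (g z).
case: (f (g z)) => [r| |] //= r0 H.
exists r; split => //.
Qed.

Lemma comp_sub z w : (f (g z) + ((z - g z) * (w - g z))%:E <= f w)%E.
Proof.
have [r [fr [r0 _]]] := comp_fin z; rewrite fr.
have := fge0 w; case Ew: (f w) => [q| |] //= q0; last by rewrite leey.
rewrite -EFinD lee_fin.
set p := g z; set d := w - p.
apply/ler_addgt0Pr => e e0.
set c := 2^-1 * d ^+ 2 + 1.
have c0 : 0 < c by rewrite /c; have := sqr_ge0 d; lra.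
set t := Num.min (e / c) (2^-1).
have t0 : 0 < t by rewrite lt_min divr_gt0 //= invr_gt0 ltr0n.
have t1 : t < 1 by rewrite gt_min; apply/orP; right; lra.
have tc : t * c <= e.
  have : t <= e / c by rewrite ge_min lexx.
  by rewrite ler_pdivlMr // => H; rewrite (le_trans _ H).
set y := t * w + (1 - t) * p.
have Hc : (f y <= t%:E * q%:E + (1-t)%:E * r%:E)%E.
  by rewrite -Ew -fr; apply: fcvx; rewrite t0 t1.
have := fge0 y.
case Efy: (f y) => [fy| |] //= fy0; last first.
  by move: Hc; rewrite Efy -!EFinM -EFinD leye_eq.
move: Hc; rewrite Efy -!EFinM -EFinD lee_fin => Hy.
have := prox z y; rewrite fr Efy -!EFinD lee_fin -/p => Hp.
have Ey : z - y = (z - p) - t * d by rewrite /y /d; ring.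
rewrite Ey in Hp.
have key : t * (r + (z - p) * d - q) <= t * (t * (2^-1 * d ^+ 2)).
  nra.
rewrite ler_pM2l // in key.
have : t * (2^-1 * d ^+ 2) <= t * c.
  by rewrite ler_pM2l // /c lerDl.
lra.
Qed.

End comp.

Lemma comp_bound {R : realType} (f : R -> \bar R) (g : R -> R) :
  econvex f -> f 0%R = 0%E -> (forall x, (f 0%R <= f x)%E) -> is_prox f g ->
  forall z, (f (g z) <= (z ^+ 2)%:E)%E /\ (z - g z) ^+ 2 <= z ^+ 2.
Proof.
move=> c f0 fge pr z; have [r [-> [r0 H]]] := comp_fin _ _ f0 fge pr z.
rewrite lee_fin; have := sqr_ge0 z; have := sqr_ge0 (z - g z); split; lra.
Qed.

Lemma fin_ex {R : realType} (X : \bar R) : (0 <= X)%E -> (X < +oo)%E ->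
  exists a, X = a%:E.
Proof. by case: X => [a| |] //; exists a. Qed.

Section sums.
Context {R : realType} {L : countType}.

Lemma esum_nat_fin (a : L -> R) : (forall l, 0 <= a l) ->
  (\esum_(l in [set: L]) (a l)%:E < +oo)%E ->
  forall n, (\esum_(l in [set: L]) (n%:R * a l)%:E < +oo)%E.
Proof.
move=> a0 fa; elim=> [|n IH].
  by rewrite esum1 // => l _; rewrite mul0r.
rewrite (eq_esum (b := fun l => (n%:R * a l)%:E + (a l)%:E)); last first.
  by move=> l _; rewrite -EFinD mulrSr mulrDl mul1r.
rewrite esumD; first exact: lte_add_pinfty.
  by move=> l _; rewrite lee_fin mulr_ge0.
by move=> l _; rewrite lee_fin.
Qed.

Lemma esum_scale_fin (a : L -> R) : (forall l, 0 <= a l) ->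
  (\esum_(l in [set: L]) (a l)%:E < +oo)%E ->
  forall c, (\esum_(l in [set: L]) (c * a l)%:E < +oo)%E.
Proof.
move=> a0 fa c.
have cb := archi_boundP (normr_ge0 c).
have Hn := esum_nat_fin _ a0 fa (Num.Def.archi_bound `|c|).
apply: (le_lt_trans _ Hn).
apply: le_esum => l _; rewrite lee_fin ler_wpM2r //.
exact: le_trans (ler_norm c) (ltW cb).
Qed.

Lemma esum_add_fin (a b : L -> R) : (forall l, 0 <= a l) -> (forall l, 0 <= b l) ->
  (\esum_(l in [set: L]) (a l)%:E < +oo)%E ->
  (\esum_(l in [set: L]) (b l)%:E < +oo)%E ->
  (\esum_(l in [set: L]) (a l + b l)%:E < +oo)%E.
Proof.
move=> a0 b0 fa fb.
rewrite (eq_esum (b := fun l => (a l)%:E + (b l)%:E)); last by move=> l _; rewrite EFinD.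
rewrite esumD; first exact: lte_add_pinfty.
  by move=> l _; rewrite lee_fin.
by move=> l _; rewrite lee_fin.
Qed.
End sums.
Theorem lemma3p5 (R : realType) (L : countType) (phi : R -> R -> R -> R)
  (kappa : L -> R) (s : R -> L -> R -> \bar R) (alpha : R) :
  nonlinear_reg_filter phi ->
  (forall l, 0 < kappa l) ->
  (exists M : R, forall l, kappa l <= M) ->
  kappa_reg_family phi kappa s ->
  0 < alpha ->
  (forall x, in_ran_MPhi phi alpha kappa x ->
     in_dom (kappa_regularizer kappa s alpha) x) /\
  (forall x, in_ran_MPhi phi alpha kappa x ->
     in_dom_subdiff (kappa_regularizer kappa s alpha) x).
Proof.
move=> _ kpos [M kM] fam a0.
have Hf l : [/\ econvex (s alpha l), s alpha l 0%R = 0%E,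
   (forall x, (s alpha l 0%R <= s alpha l x)%E) & is_prox (s alpha l) (phi alpha (kappa l))].
  by have [_ ? _ [? ?] ?] := fam alpha l a0.
have key : forall x, in_ran_MPhi phi alpha kappa x ->
  exists z, [/\ l2 z, l2 x, (forall l, kappa l * x l = phi alpha (kappa l) (z l)) &
   (kappa_regularizer kappa s alpha x < +oo)%E].
  move=> x [z [lz [[_ lx] ->]]]; exists z.
  have hx l : kappa l * Mplus kappa (Phi phi alpha kappa z) l = phi alpha (kappa l) (z l).
    by rewrite /Mplus /Phi mulrC divfK // gt_eqF.
  split => //.
  rewrite /kappa_regularizer (eq_esum (b := fun l => s alpha l (phi alpha (kappa l) (z l)))); last first.
    by move=> l _; rewrite hx.
  apply: le_lt_trans lz; apply: le_esum => l _.
  by have [c f0 fge pr] := Hf l; have [] := comp_bound _ _ c f0 fge pr (z l).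
split; first by move=> x /key [z [_ lx _ fin]].
move=> x /key [z [lz lx hx fin]]; split => //.
set p := fun l => phi alpha (kappa l) (z l).
have Hc l := Hf l.
have Hsq l : (z l - p l) ^+ 2 <= z l ^+ 2.
  by have [c f0 fge pr] := Hf l; have [] := comp_bound _ _ c f0 fge pr (z l).
set v := fun l => kappa l * (z l - p l).
have sq0 (u : R) : 0 <= u ^+ 2 by exact: sqr_ge0.
have lv : l2 v.
  rewrite /l2; apply: (le_lt_trans _ (esum_scale_fin _ (fun l => sq0 (z l)) lz (M ^+ 2))).
  apply: le_esum => l _; rewrite lee_fin /v exprMn.
  have k0 := kpos l; have k1 := kM l; have := Hsq l; have := sq0 (z l - p l).
  have : kappa l ^+ 2 <= M ^+ 2 by rewrite ler_pXn2r // ?nnegrE; [exact: ltW | exact: (le_trans (ltW k0) k1)].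
  nra.
exists v; split => // y ly.
set b := fun l => v l * (y l - x l).
have eb l : b l = (z l - p l) * (kappa l * y l - p l).
  have hp : p l = kappa l * x l by rewrite hx.
  rewrite /b /v hp; ring.
have RX : kappa_regularizer kappa s alpha x = \esum_(l in [set: L]) s alpha l (p l).
  by apply: eq_esum => l _; rewrite hx.
have bbnd l : Num.max (b l) 0 <= v l ^+ 2 + (2 * y l ^+ 2 + 2 * x l ^+ 2) /\
              Num.max (- b l) 0 <= v l ^+ 2 + (2 * y l ^+ 2 + 2 * x l ^+ 2).
  have := sq0 (v l - (y l - x l)); have := sq0 (v l + (y l - x l)); have := sq0 (y l + x l);
  have := sq0 (v l); have := sq0 (y l); have := sq0 (x l).
  rewrite /b !ge_max => *; split; apply/andP; split; nra.
have fbnd : (\esum_(l in [set: L]) (v l ^+ 2 + (2 * y l ^+ 2 + 2 * x l ^+ 2))%:E < +oo)%E.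
  apply: esum_add_fin => //; first by move=> l; rewrite addr_ge0 // mulr_ge0.
  apply: esum_add_fin => //; try by move=> l; rewrite mulr_ge0.
    exact: esum_scale_fin.
  exact: esum_scale_fin.
have Bp : (\esum_(l in [set: L]) (Num.max (b l) 0)%:E < +oo)%E.
  by apply: le_lt_trans fbnd; apply: le_esum => l _; rewrite lee_fin; case: (bbnd l).
have Bm : (\esum_(l in [set: L]) (Num.max (- b l) 0)%:E < +oo)%E.
  by apply: le_lt_trans fbnd; apply: le_esum => l _; rewrite lee_fin; case: (bbnd l).
have pw l : (s alpha l (p l) + (Num.max (b l) 0)%:E <=
             s alpha l (kappa l * y l)%R + (Num.max (- b l) 0)%:E)%E.
  have [c f0 fge pr] := Hf l.
  have := comp_sub _ _ c f0 fge pr (z l) (kappa l * y l).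
  have [r [-> _]] := comp_fin _ _ f0 fge pr (z l).
  rewrite -/(p l) -eb.
  have := fge (kappa l * y l); rewrite f0.
  case: (s alpha l (kappa l * y l)) => [q| |] // _; last by move=> _; rewrite addye // leey.
  rewrite -!EFinD !lee_fin => H.
  have : Num.max (b l) 0 = b l + Num.max (- b l) 0.
    by case/orP: (le_total 0 (b l)) => hb; [rewrite (max_idPl hb) (max_idPr _) ?addr0 // oppr_le0 | rewrite (max_idPr hb) (max_idPl _) ?subrr // oppr_ge0].
  move=> ->; lra.
have S := le_esum (I := [set: L]) (fun l _ => pw l).
rewrite !esumD /= in S; try by move=> l _; rewrite ?lee_fin ?le_max ?lexx ?orbT //; have [_ f0 fge _] := Hf l; rewrite -f0.
have ge0p l : (0 <= s alpha l (p l))%E by have [_ f0 fge _] := Hf l; rewrite -f0.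
have finA : (\esum_(l in [set: L]) s alpha l (p l) < +oo)%E by rewrite -RX.
have [A EA] := fin_ex _ (esum_ge0 (fun l _ => ge0p l)) finA.
have mx0 (u : R) : (0 <= (Num.max u 0)%:E)%E by rewrite lee_fin le_max lexx orbT.
have [P EP] := fin_ex _ (esum_ge0 (fun l _ => mx0 (b l))) Bp.
have [N EN] := fin_ex _ (esum_ge0 (fun l _ => mx0 (- b l))) Bm.
rewrite /l2_inner RX -/b EA EP EN /= in S *.
move: S; rewrite /kappa_regularizer.
have ge0p' l : (0%R <= s alpha l (kappa l * y l)%R)%E by have [_ f0 fge _] := Hf l; rewrite -f0.
have := esum_ge0 (S := [set: L]) (a := fun l => s alpha l (kappa l * y l)%R) (fun l _ => ge0p' l).
case: (\esum_(l in [set: L]) s alpha l (kappa l * y l)%R) => [c| |] //= _.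
  rewrite -!EFinD !lee_fin; lra.
by move=> _; rewrite leey.
Qed.
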